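(* Assume (A), (R), (S) and let $c$ be a global solution of (E) with initial condition $c^{\mathrm{in}}\in\ell^1_1$. Then $$\mathfrak m_1(t)=\sum_{k=1}^\infty kc_k(t)\le\max\{\mathfrak m_1^{\mathrm{in}},\widehat{\mathfrak s}_1\}\quad\text{for all }t\ge0.$$ Moreover there exists $T>0$, depending only on $\mathfrak m_1^{\mathrm{in}}$, $\widehat{\mathfrak s}_1$ and $R_*$, such that $\mathfrak m_1(t)\le 2\widehat{\mathfrak s}_1$ for all $t\ge T$.
   Context: Throughout, $\mathbb N=\{1,2,\dots\}$. We consider the forced discrete coagulation equation $$\frac{d}{dt}c_k=\frac12\sum_{\ell=1}^{k-1}a_{k-\ell,\ell}c_{k-\ell}c_\ell-c_k\sum_{\ell=1}^{\infty}a_{k,\ell}c_\ell+s_k-r_kc_k,\qquad k\in\mathbb N,\tag{E}$$ with real coefficients satisfying the standing assumptions: (A) $a_{k,\ell}=a_{\ell,k}$ and $0\le a_{k,\ell}\le A_*(k^\alpha\ell^\beta+k^\beta\ell^\alpha)$ for all $k,\ell\in\mathbb N$, with constants $A_*>0$, $\alpha,\beta\in[0,1]$, $\alpha\le\beta$; (R) $r_k\ge R_*k^\gamma$ for all $k\in\mathbb N$, with $R_*>0$ and $\gamma>\max\{0,\alpha+\beta-1\}$; (S) $s_k\ge 0$ for all $k$, and for every $\mu\ge0$ there is $\mathfrak s_\mu>0$ with $\sum_{k\ge1}k^\mu s_k\le\mathfrak s_\mu$. Write $\widehat A_*=A_*/R_*$ and $\widehat{\mathfrak s}_\mu=\mathfrak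 s_\mu/R_*$. For $\mu\ge0$, $\ell^1_\mu$ is the set of sequences $(c_k)_{k\in\mathbb N}$ with $c_k\in[0,\infty)$ and $\sum_k k^\mu c_k<\infty$. Solution: a sequence $c=(c_k)_{k\in\mathbb N}$ of continuous functions $c_k:[0,T)\to[0,\infty)$ is a solution of (E) on $[0,T)$ with initial condition $c^{\mathrm{in}}\in\ell^1_1$ if (i) for each $k$, (E) holds for all $t\in(0,T)$; (ii) for each $\mu\ge1$, $c\in L^\infty([0,T),\ell^1_1)\cap C^1((0,T),\ell^1_\mu)$; (iii) $c_k(0)=c_k^{\mathrm{in}}$ for all $k$. It is a global solution if $T=\infty$. Moments: $\mathfrak m_\mu(t)=\sum_k k^\mu c_k(t)$, $\mathfrak m_1^{\mathrm{in}}=\sum_k k c_k^{\mathrm{in}}$. *)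

(* Defs.v *)
From Stdlib Require Import Reals Lra.
Open Scope R_scope.

(* Sequences indexed by N = {1,2,...} are modelled as functions nat -> R;
   the value at index 0 is never used. *)

Fixpoint fsum (f : nat -> R) (n : nat) : R :=
  match n with
  | O => 0
  | S m => fsum f m + f (S m)
  end.

Definition series_sum (f : nat -> R) (L : R) : Prop :=
  Un_cv (fun n => fsum f n) L.

Definition wnorm_lt (mu : R) (x : nat -> R) (eps : R) : Prop :=
  exists S, series_sum (fun k => Rpower (INR k) mu * Rabs (x k)) S /\ S < eps.

Definition in_l1w (mu : R) (x : nat -> R) : Prop :=
  exists S, series_sum (fun k => Rpower (INR k) mu * Rabs (x k)) S.

Definition gain (a : nat -> nat -> R) (c : nat -> R -> R) (k : nat) (t : R) : R :=
  / 2 * fsum (fun l => a (k - l)%nat l * c (k - l)%nat t * c l t) (k - 1).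

(* t |-> c(t) is in C^1((0,infinity), l^1_mu) *)
Definition C1_l1w (mu : R) (c : nat -> R -> R) : Prop :=
  exists d : nat -> R -> R,
    (forall t, 0 < t -> in_l1w mu (fun k => c k t)) /\
    (forall t, 0 < t -> in_l1w mu (fun k => d k t)) /\
    (forall t, 0 < t -> forall eps, 0 < eps -> exists delta, 0 < delta /\
        forall h, h <> 0 -> Rabs h < delta -> 0 < t + h ->
          wnorm_lt mu (fun k => (c k (t + h) - c k t) / h - d k t) eps) /\
    (forall t, 0 < t -> forall eps, 0 < eps -> exists delta, 0 < delta /\
        forall t', 0 < t' -> Rabs (t' - t) < delta ->
          wnorm_lt mu (fun k => d k t' - d k t) eps).

Definition global_solution (a : nat -> nat -> R) (s r : nat -> R)
    (cin : nat -> R) (c : nat -> R -> R) : Prop :=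
  (forall k t, (1 <= k)%nat -> 0 <= t -> 0 <= c k t) /\
  (forall k t, (1 <= k)%nat -> 0 <= t -> forall eps, 0 < eps ->
      exists delta, 0 < delta /\ forall t', 0 <= t' -> Rabs (t' - t) < delta ->
        Rabs (c k t' - c k t) < eps) /\
  (forall k t, (1 <= k)%nat -> 0 < t ->
      exists L, series_sum (fun l => a k l * c l t) L /\
        derivable_pt_lim (c k) t (gain a c k t - c k t * L + s k - r k * c k t)) /\
  (exists M, forall t, 0 <= t ->
      exists S, series_sum (fun k => INR k * c k t) S /\ S <= M) /\
  (forall mu, 1 <= mu -> C1_l1w mu c) /\
  (forall k, (1 <= k)%nat -> c k 0 = cin k).

(* Main.v *)
Require Import Defs.
From Stdlib Require Import Reals Lra Lia Classical ClassicalEpsilon.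
Open Scope R_scope.

Lemma fsum_ext f g n : (forall i, (1 <= i <= n)%nat -> f i = g i) -> fsum f n = fsum g n.
Proof. induction n; simpl; intros H; auto. rewrite IHn; [rewrite H|]; auto; intros; try lia; apply H; lia. Qed.

Lemma fsum_nonneg f n : (forall i, (1 <= i <= n)%nat -> 0 <= f i) -> 0 <= fsum f n.
Proof. induction n; simpl; intros H; [lra|]. assert (0 <= f (S n)) by (apply H; lia).
 assert (0 <= fsum f n) by (apply IHn; intros; apply H; lia). lra. Qed.

Lemma fsum_le f g n : (forall i, (1 <= i <= n)%nat -> f i <= g i) -> fsum f n <= fsum g n.
Proof. induction n; simpl; intros H; [lra|]. assert (f (S n) <= g (S n)) by (apply H; lia).
 assert (fsum f n <= fsum g n) by (apply IHn; intros; apply H; lia). lra. Qed.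

Lemma fsum_plus f g n : fsum (fun i => f i + g i) n = fsum f n + fsum g n.
Proof. induction n; simpl; lra. Qed.
Lemma fsum_minus f g n : fsum (fun i => f i - g i) n = fsum f n - fsum g n.
Proof. induction n; simpl; lra. Qed.
Lemma fsum_scal a f n : fsum (fun i => a * f i) n = a * fsum f n.
Proof. induction n; simpl; lra. Qed.

Lemma fsum_shift h n : fsum h (S n) = h 1%nat + fsum (fun i => h (S i)) n.
Proof. induction n; simpl in *; [lra|]. rewrite IHn. lra. Qed.

Lemma fsum_refl n : forall h, fsum h n = fsum (fun i => h (n + 1 - i)%nat) n.
Proof. induction n; intros h; [reflexivity|].
 rewrite fsum_shift, IHn. cbn [fsum].
 replace (S n + 1 - S n)%nat with 1%nat by lia.
 rewrite (fsum_ext (fun i => h (S (n + 1 - i))) (fun i => h (S n + 1 - i)%nat)); [lra|].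
 intros i Hi. f_equal. lia. Qed.

Lemma partial_le f L n : (forall i, (1 <= i)%nat -> 0 <= f i) -> series_sum f L -> fsum f n <= L.
Proof. intros H HL. apply (growing_ineq (fun n => fsum f n)); auto.
 intro m. simpl. assert (0 <= f (S m)) by (apply H; lia). lra. Qed.

Lemma lim_le u l B : Un_cv u l -> (forall n, u n <= B) -> l <= B.
Proof. intros Hu HB. apply (Rle_cv_lim (Un:=u) (Vn:=fun _ => B)); auto.
 intros e He; exists 0%nat; intros; unfold Rdist; rewrite Rminus_diag, Rabs_R0; auto. Qed.

Definition Fc (a : nat -> nat -> R) (cc : nat -> R) i j := a i j * cc i * cc j.
Definition Gs (a : nat -> nat -> R) (cc : nat -> R) N := fsum (fun k => INR k * (/2 * fsum (fun l => a (k-l)%nat l * cc (k-l)%nat * cc l) (k-1))) N.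
Definition Ts (a : nat -> nat -> R) (cc : nat -> R) N := fsum (fun i => INR i * cc i * fsum (fun j => a i j * cc j) (N - i)) N.

Lemma Fsym (a : nat -> nat -> R) (cc : nat -> R) (Hsym : forall i j, (1<=i)%nat -> (1<=j)%nat -> a i j = a j i) i j : (1<=i)%nat -> (1<=j)%nat -> Fc a cc i j = Fc a cc j i.
Proof. intros; unfold Fc; rewrite Hsym by auto; ring. Qed.

Lemma key (a : nat -> nat -> R) (cc : nat -> R) (Hsym : forall i j, (1<=i)%nat -> (1<=j)%nat -> a i j = a j i) N : fsum (fun i => INR i * Fc a cc i (S N - i)%nat) N = INR (S N) * / 2 * fsum (fun l => Fc a cc (S N - l)%nat l) N.
Proof.
 set (X := fsum (fun i => INR i * Fc a cc i (S N - i)%nat) N).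
 set (Y := fsum (fun i => Fc a cc i (S N - i)%nat) N).
 assert (E1 : fsum (fun l => Fc a cc (S N - l)%nat l) N = Y).
 { unfold Y; apply fsum_ext; intros; apply (Fsym a cc Hsym); lia. }
 assert (E2 : X = INR (S N) * Y - X).
 { unfold X at 1. rewrite fsum_refl.
   unfold X, Y. rewrite <- fsum_scal, <- fsum_minus. apply fsum_ext. intros i Hi.
   replace (S N - (N + 1 - i))%nat with i by lia.
   rewrite (Fsym a cc Hsym) by lia. replace (N + 1 - i)%nat with (S N - i)%nat by lia.
   rewrite minus_INR by lia. ring. }
 rewrite E1. lra.
Qed.

Lemma GT (a : nat -> nat -> R) (cc : nat -> R) (Hsym : forall i j, (1<=i)%nat -> (1<=j)%nat -> a i j = a j i) N : Gs a cc N = Ts a cc N.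
Proof.
 induction N. reflexivity.
 unfold Gs, Ts in *. cbn [fsum]. rewrite IHN.
 replace (S N - 1)%nat with N by lia. replace (S N - S N)%nat with 0%nat by lia. cbn [fsum].
 rewrite (fsum_ext (fun i => INR i * cc i * fsum (fun j => a i j * cc j) (S N - i))
    (fun i => INR i * cc i * fsum (fun j => a i j * cc j) (N - i) + INR i * Fc a cc i (S N - i)%nat)).
 2:{ intros i Hi. replace (S N - i)%nat with (S (N - i)) by lia. cbn [fsum].
     replace (S (N - i)) with (S N - i)%nat by lia. unfold Fc. ring. }
 rewrite fsum_plus, (key a cc Hsym). unfold Fc. ring.
Qed.


Definition D0 := fun x : R => 0 <= x.

Lemma mono_lemma h h' :
  (forall t, 0 < t -> derivable_pt_lim h t (h' t)) -> (forall t, 0 < t -> h' t <= 0) ->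
  limit1_in h D0 (h 0) 0 -> forall t, 0 <= t -> h t <= h 0.
Proof.
 intros Hd Hn Hl t Ht. destruct (Req_dec t 0) as [->|Ht0]; [lra|].
 destruct (Rle_or_lt (h t) (h 0)) as [|Hc]; auto. exfalso.
 destruct (Hl (h t - h 0)) as [alp [Halp Hx]]; [lra|].
 set (e := Rmin (alp/2) (t/2)).
 assert (He : 0 < e) by (unfold e; apply Rmin_glb_lt; lra).
 assert (He2 : e < t) by (unfold e; assert (Rmin (alp/2) (t/2) <= t/2) by apply Rmin_r; lra).
 assert (He3 : e < alp) by (unfold e; assert (Rmin (alp/2) (t/2) <= alp/2) by apply Rmin_l; lra).
 destruct (MVT_cor2 h h' e t He2) as [x [Hx1 Hx2]].
 { intros; apply Hd; lra. }
 assert (h' x <= 0) by (apply Hn; lra).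
 assert (h t - h e <= 0) by (rewrite Hx1; assert (0 < t - e) by lra; nra).
 specialize (Hx e). simpl in Hx. unfold R_dist, D0 in Hx.
 assert (Habs : Rabs (h e - h 0) < h t - h 0) by (apply Hx; split; [lra|]; rewrite Rminus_0_r, Rabs_pos_eq; lra).
 apply Rabs_def2 in Habs. lra.
Qed.

Lemma lim_const k : limit1_in (fun _ => k) D0 k 0.
Proof. intros e He; exists 1; split; [lra|]; intros; simpl; unfold R_dist; rewrite Rminus_diag, Rabs_R0; lra. Qed.

Lemma lim_fsum F N : (forall k, (1 <= k <= N)%nat -> limit1_in (F k) D0 (F k 0) 0) ->
  limit1_in (fun t => fsum (fun k => F k t) N) D0 (fsum (fun k => F k 0) N) 0.
Proof. induction N; intros H; simpl. apply lim_const.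
 apply limit_plus; [apply IHN; intros; apply H; lia| apply H; lia]. Qed.

Lemma lim_exp R0 : limit1_in (fun t => exp (R0 * t)) D0 (exp (R0 * 0)) 0.
Proof.
 assert (Hc : continuity_pt (fun t => exp (R0 * t)) 0).
 { apply derivable_continuous_pt. exists (exp (R0*0) * R0).
   apply (derivable_pt_lim_comp (fun t => R0 * t) exp).
   - pattern R0 at 2; replace R0 with (R0 * 1) by ring. change (derivable_pt_lim (mult_real_fct R0 id) 0 (R0*1)). apply (derivable_pt_lim_scal id). apply derivable_pt_lim_id.
   - apply derivable_pt_lim_exp. }
 intros e He. destruct (Hc e He) as [alp [Ha Hx]]. exists alp; split; auto.
 intros x [Hx1 Hx2]. destruct (Req_dec x 0) as [->|Hne].
 simpl; unfold R_dist; rewrite Rminus_diag, Rabs_R0; lra.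
 apply Hx. split; auto. split; [exact I| congruence].
Qed.

Lemma fsum_deriv F D N t : (forall k, (1 <= k <= N)%nat -> derivable_pt_lim (F k) t (D k)) ->
  derivable_pt_lim (fun x => fsum (fun k => F k x) N) t (fsum D N).
Proof. induction N; intros H; simpl. apply derivable_pt_lim_const.
 apply (derivable_pt_lim_plus (fun x => fsum (fun k => F k x) N) (F (S N))); [apply IHN; intros; apply H; lia| apply H; lia]. Qed.

Lemma deriv_exp R0 t : derivable_pt_lim (fun t => exp (R0 * t)) t (exp (R0*t) * R0).
Proof.
   apply (derivable_pt_lim_comp (fun t => R0 * t) exp).
   - pattern R0 at 2; replace R0 with (R0 * 1) by ring. change (derivable_pt_lim (mult_real_fct R0 id) t (R0*1)). apply (derivable_pt_lim_scal id). apply derivable_pt_lim_id.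
   - apply derivable_pt_lim_exp.
Qed.

Lemma exp_le' x y : x <= y -> exp x <= exp y.
Proof. intros [H|H]; [left; apply exp_increasing; auto| subst; lra]. Qed.

Lemma bound_main (a : nat -> nat -> R) (r s : nat -> R) (Rstar gamma fs1 : R)
  (cin : nat -> R) (m1in : R) (c : nat -> R -> R) :
    (forall k l, (1 <= k)%nat -> (1 <= l)%nat -> a k l = a l k /\ 0 <= a k l) ->
    0 < Rstar -> 0 < gamma ->
    (forall k, (1 <= k)%nat -> Rstar * Rpower (INR k) gamma <= r k) ->
    (forall k, (1 <= k)%nat -> 0 <= s k) ->
    (exists S, series_sum (fun k => Rpower (INR k) 1 * s k) S /\ S <= fs1) ->
    (forall k, (1 <= k)%nat -> 0 <= cin k) ->
    series_sum (fun k => INR k * cin k) m1in ->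
    global_solution a s r cin c ->
    forall N t, 0 <= t ->
     fsum (fun k => INR k * c k t) N <= fs1 / Rstar + (m1in - fs1 / Rstar) * exp (- (Rstar * t)).
Proof.
 intros Ha HR Hg Hr Hs0 [S1 [HS1 HS1b]] Hcin Hm1 [Hpos [Hcont [Hder [_ [_ Hinit]]]]] N t Ht.
 set (sig := fs1 / Rstar).
 assert (HL0 : forall k t, exists L, (1<=k)%nat -> 0<t -> series_sum (fun l => a k l * c l t) L /\
    derivable_pt_lim (c k) t (gain a c k t - c k t * L + s k - r k * c k t)).
 { intros k t0. destruct (classic ((1<=k)%nat /\ 0<t0)) as [[H1 H2]|H].
   - destruct (Hder k t0 H1 H2) as [L HL]. exists L; auto.
   - exists 0. intros; exfalso; auto. }
 set (Lf := fun k t => proj1_sig (constructive_indefinite_description _ (HL0 k t))).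
 assert (HLf : forall k t, (1<=k)%nat -> 0<t -> series_sum (fun l => a k l * c l t) (Lf k t) /\
    derivable_pt_lim (c k) t (gain a c k t - c k t * Lf k t + s k - r k * c k t)).
 { intros k t0. unfold Lf. destruct (constructive_indefinite_description _ (HL0 k t0)). simpl. auto. }
 clearbody Lf.
 set (M := fun t => fsum (fun k => INR k * c k t) N).
 set (M' := fun t => fsum (fun k => INR k * (gain a c k t - c k t * Lf k t + s k - r k * c k t)) N).
 set (h := fun t => (M t - sig) * exp (Rstar * t)).
 set (h' := fun t => M' t * exp (Rstar * t) + (M t - sig) * (exp (Rstar * t) * Rstar)).
 assert (HM' : forall t, 0 < t -> M' t <= fs1 - Rstar * M t).
 { intros t0 Ht0. unfold M', M.
   rewrite (fsum_ext _ (fun k => (INR k * (gain a c k t0 - c k t0 * Lf k t0) + INR k * s k) - INR k * r k * c k t0)) by (intros; ring).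
   rewrite fsum_minus, fsum_plus.
   assert (E1 : fsum (fun k => INR k * (gain a c k t0 - c k t0 * Lf k t0)) N =
      Gs a (fun l => c l t0) N - fsum (fun k => INR k * c k t0 * Lf k t0) N).
   { unfold Gs, gain. rewrite <- fsum_minus. apply fsum_ext; intros; ring. }
   assert (E2 : Gs a (fun l => c l t0) N <= fsum (fun k => INR k * c k t0 * Lf k t0) N).
   { rewrite GT by (intros; apply Ha; auto). unfold Ts. apply fsum_le. intros i Hi.
     assert (0 <= INR i * c i t0) by (apply Rmult_le_pos; [apply pos_INR| apply Hpos; [lia|lra]]).
     apply Rmult_le_compat_l; auto. apply partial_le.
     - intros l Hl. apply Rmult_le_pos; [apply Ha; lia| apply Hpos; [lia|lra]].
     - destruct (HLf i t0) as [HH _]; [lia|lra|exact HH]. }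
   assert (E3 : fsum (fun k => INR k * s k) N <= fs1).
   { assert (fsum (fun k => Rpower (INR k) 1 * s k) N <= S1).
     { apply partial_le; auto. intros i Hi. apply Rmult_le_pos; [left; apply exp_pos| apply Hs0; lia]. }
     rewrite (fsum_ext _ (fun k => Rpower (INR k) 1 * s k)); [lra|].
     intros i Hi. rewrite Rpower_1; auto. apply lt_0_INR; lia. }
   assert (E4 : Rstar * fsum (fun k => INR k * c k t0) N <= fsum (fun k => INR k * r k * c k t0) N).
   { rewrite <- fsum_scal. apply fsum_le. intros i Hi.
     assert (0 <= INR i * c i t0) by (apply Rmult_le_pos; [apply pos_INR| apply Hpos; [lia|lra]]).
     assert (Rstar <= r i).
     { apply Rle_trans with (Rstar * Rpower (INR i) gamma); [|apply Hr; lia].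
       assert (1 <= Rpower (INR i) gamma).
       { rewrite <- (Rpower_O (INR i)) by (apply lt_0_INR; lia). apply Rle_Rpower; [|lra].
         replace 1 with (INR 1) by reflexivity. apply le_INR; lia. }
       nra. }
     nra. }
   lra. }

 assert (Hh' : forall t, 0 < t -> derivable_pt_lim h t (h' t)).
 { intros t0 Ht0. unfold h, h'.
   apply (derivable_pt_lim_mult (fun t => M t - sig) (fun t => exp (Rstar * t))).
   - replace (M' t0) with (M' t0 - 0) by ring.
     apply (derivable_pt_lim_minus M (fun _ => sig)); [|apply derivable_pt_lim_const].
     unfold M, M'. apply (fsum_deriv (fun k t => INR k * c k t)). intros k Hk.
     change (derivable_pt_lim (mult_real_fct (INR k) (c k)) t0 (INR k * (gain a c k t0 - c k t0 * Lf k t0 + s k - r k * c k t0))).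
     apply derivable_pt_lim_scal. apply HLf; [lia|lra].
   - apply deriv_exp. }
 assert (Hh'n : forall t, 0 < t -> h' t <= 0).
 { intros t0 Ht0. unfold h'. specialize (HM' t0 Ht0). assert (0 < exp (Rstar * t0)) by apply exp_pos.
   assert (Rstar * sig = fs1) by (unfold sig; field; lra).
   assert (M' t0 + (M t0 - sig) * Rstar <= 0) by nra. nra. }
 assert (Hlim : limit1_in h D0 (h 0) 0).
 { unfold h. apply (limit_mul (fun t => M t - sig) (fun t => exp (Rstar * t))); [|apply lim_exp].
   apply (limit_minus M (fun _ => sig)); [|apply lim_const].
   unfold M. apply (lim_fsum (fun k t => INR k * c k t)). intros k Hk.
   apply (limit_mul (fun _ => INR k) (c k)); [apply lim_const|].
   intros e He. destruct (Hcont k 0 ltac:(lia) (Rle_refl 0) e He) as [d [Hd Hx]].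
   exists d; split; auto. intros x [Hx1 Hx2]. apply Hx; auto. }
 pose proof (mono_lemma h h' Hh' Hh'n Hlim t Ht) as Hmono.
 assert (HM0 : M 0 <= m1in).
 { unfold M. rewrite (fsum_ext _ (fun k => INR k * cin k)).
   - apply partial_le; auto. intros i Hi. apply Rmult_le_pos; [apply pos_INR|auto].
   - intros i Hi. rewrite Hinit by lia. reflexivity. }
 unfold h in Hmono. rewrite Rmult_0_r, exp_0, Rmult_1_r in Hmono.
 change (M t <= sig + (m1in - sig) * exp (- (Rstar * t))).
 rewrite exp_Ropp. assert (0 < exp (Rstar * t)) by apply exp_pos.
 assert (M t - sig <= (m1in - sig) / exp (Rstar * t)).
 { apply Rmult_le_reg_r with (exp (Rstar * t)); auto. field_simplify; lra. }
 unfold Rdiv in *. lra.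
Qed.

Theorem mainTheorem5 :
  exists Tf : R -> R -> R -> R,
  forall (a : nat -> nat -> R) (r s : nat -> R)
         (Astar alpha beta Rstar gamma : R) (frak_s : R -> R)
         (cin : nat -> R) (m1in : R) (c : nat -> R -> R),
    (* (A) *)
    0 < Astar -> 0 <= alpha -> alpha <= beta -> beta <= 1 ->
    (forall k l, (1 <= k)%nat -> (1 <= l)%nat ->
       a k l = a l k /\ 0 <= a k l /\
       a k l <= Astar * (Rpower (INR k) alpha * Rpower (INR l) beta
                         + Rpower (INR k) beta * Rpower (INR l) alpha)) ->
    (* (R) *)
    0 < Rstar -> Rmax 0 (alpha + beta - 1) < gamma ->
    (forall k, (1 <= k)%nat -> Rstar * Rpower (INR k) gamma <= r k) ->
    (* (S) *)
    (forall k, (1 <= k)%nat -> 0 <= s k) ->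
    (forall mu, 0 <= mu -> 0 < frak_s mu /\
       exists S, series_sum (fun k => Rpower (INR k) mu * s k) S /\ S <= frak_s mu) ->
    (* initial datum in l^1_1 with first moment m1in *)
    (forall k, (1 <= k)%nat -> 0 <= cin k) ->
    series_sum (fun k => INR k * cin k) m1in ->
    (* c is a global solution *)
    global_solution a s r cin c ->
    (forall t m1, 0 <= t -> series_sum (fun k => INR k * c k t) m1 ->
       m1 <= Rmax m1in (frak_s 1 / Rstar)) /\
    0 < Tf m1in (frak_s 1 / Rstar) Rstar /\
    (forall t m1, Tf m1in (frak_s 1 / Rstar) Rstar <= t ->
       series_sum (fun k => INR k * c k t) m1 ->
       m1 <= 2 * (frak_s 1 / Rstar)).
Proof.
 exists (fun m sh R0 => 1 + Rabs (ln (m / sh)) / R0).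
 intros a r s Astar alpha beta Rstar gamma frak_s cin m1in c
   HA Hal Hab Hb1 Ha HR Hgam Hr Hs0 Hs Hcin Hm1 Hsol.
 assert (Hg : 0 < gamma) by (pose proof (Rmax_l 0 (alpha + beta - 1)); lra).
 destruct (Hs 1 ltac:(lra)) as [Hfs HS].
 set (sig := frak_s 1 / Rstar).
 assert (Hsig : 0 < sig) by (unfold sig; apply Rdiv_lt_0_compat; auto).
 assert (Hbd : forall t m1, 0 <= t -> series_sum (fun k => INR k * c k t) m1 ->
    m1 <= sig + (m1in - sig) * exp (- (Rstar * t))).
 { intros t m1 Ht Hser. apply (lim_le _ _ _ Hser). intro N.
   apply (bound_main a r s Rstar gamma (frak_s 1) cin m1in c); auto.
   intros k l Hk Hl; destruct (Ha k l Hk Hl) as [? [? ?]]; auto. }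
 assert (HT : 0 < 1 + Rabs (ln (m1in / sig)) / Rstar).
 { assert (0 <= Rabs (ln (m1in / sig)) / Rstar) by (unfold Rdiv; apply Rmult_le_pos; [apply Rabs_pos|left; apply Rinv_0_lt_compat; lra]). lra. }
 split; [|split; auto].
 - intros t m1 Ht Hser. specialize (Hbd t m1 Ht Hser).
   assert (0 < exp (- (Rstar * t))) by apply exp_pos.
   assert (exp (- (Rstar * t)) <= 1) by (rewrite <- exp_0; apply exp_le'; nra).
   destruct (Rle_or_lt sig m1in).
   + apply Rle_trans with m1in; [nra| apply Rmax_l].
   + apply Rle_trans with sig; [nra| apply Rmax_r].
 - intros t m1 Ht Hser.
   assert (Ht0 : 0 <= t) by lra. specialize (Hbd t m1 Ht0 Hser).
   assert (0 < exp (- (Rstar * t))) by apply exp_pos.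
   destruct (Rle_or_lt m1in sig). { nra. }
   assert (Hq : 0 < m1in / sig) by (apply Rdiv_lt_0_compat; lra).
   assert (Hle : - (Rstar * t) <= - ln (m1in / sig)).
   { assert (Rstar * (1 + Rabs (ln (m1in / sig)) / Rstar) <= Rstar * t) by (apply Rmult_le_compat_l; lra).
     assert (Rstar * (1 + Rabs (ln (m1in / sig)) / Rstar) = Rstar + Rabs (ln (m1in / sig))) by (field; lra).
     pose proof (Rle_abs (ln (m1in / sig))). lra. }
   apply exp_le' in Hle. rewrite (exp_Ropp (ln _)), exp_ln in Hle by auto.
   assert (/ (m1in / sig) = sig / m1in) by (field; lra).
   assert ((m1in - sig) * exp (- (Rstar * t)) <= (m1in - sig) * (sig / m1in)) by (apply Rmult_le_compat_l; lra).
   assert ((m1in - sig) * (sig / m1in) <= sig).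
   { unfold Rdiv. assert (0 < / m1in) by (apply Rinv_0_lt_compat; lra).
     assert (m1in * / m1in = 1) by (field; lra). nra. }
   lra.
Qed.
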